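(* For any integers $x_1\ge x_2\ge1$ and any $n\ge0$, \[ p_n(x_1,x_2)\ge p_n(x_1+1,x_2-1),\qquad q_n(x_1,x_2)\ge q_n(x_1+1,x_2-1). \]
   Context: Here $p_k,q_k:\mathbf N^2\to\mathbf N$ ($\mathbf N$ the non-negative integers) are defined by the generating functions $\sum_{\mathbf x\in\mathbf N^2}\sum_{k\ge0}p_k(\mathbf x)t^{\mathbf x}u^k=\prod_{\mathbf x\in\mathbf N^2}(1-t^{\mathbf x}u)^{-1}$ and $\sum_{\mathbf x\in\mathbf N^2}\sum_{k\ge0}q_k(\mathbf x)t^{\mathbf x}u^k=\prod_{\mathbf x\in\mathbf N^2}(1+t^{\mathbf x}u)$, where $t^{(a,b)}=t_1^at_2^b$. Equivalently, $p_k(\mathbf x)$ is the number of vector partitions of $\mathbf x$ (unordered decompositions $\mathbf x=\mathbf x_1+\dots+\mathbf x_j$ with $\mathbf x_i\in\mathbf N^2\setminus\{\mathbf 0\}$) with at most $k$ parts, and $q_k(\mathbf x)$ is the number of vector partitions of $\mathbf x$ into exactly $k$ or $k-1$ distinct parts. *)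

(* Defs.v *)
From mathcomp Require Import all_boot.
Set Implicit Arguments. Unset Strict Implicit. Unset Printing Implicit Defensive.

Definition vsum (s : seq (nat * nat)) : nat * nat :=
  (sumn (map fst s), sumn (map snd s)).

(* lexicographic orders on N^2, used to pick a canonical representative
   (a sorted list) of each multiset / set of vectors *)
Definition lexle (u v : nat * nat) : bool :=
  (u.1 < v.1) || ((u.1 == v.1) && (u.2 <= v.2)).
Definition lexlt (u v : nat * nat) : bool :=
  (u.1 < v.1) || ((u.1 == v.1) && (u.2 < v.2)).

(* Every summand of x lies in the box [0,x.1] x [0,x.2]. *)
Definition box (x : nat * nat) : finType :=
  ('I_(x.1.+1) * 'I_(x.2.+1))%type.

Definition vec_of (x : nat * nat) (i : box x) : nat * nat :=
  (nat_of_ord i.1, nat_of_ord i.2).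

(* p k x = coefficient of t^x u^k in prod_{y in N^2} (1 - t^y u)^{-1}
         = number of multisets of exactly k vectors of N^2 (0 allowed)
           summing to x, represented as lex-nondecreasing k-tuples. *)
Definition p (k : nat) (x : nat * nat) : nat :=
  #|[set t : k.-tuple (box x) |
      sorted lexle (map (@vec_of x) t) && (vsum (map (@vec_of x) t) == x)]|.

(* q k x = coefficient of t^x u^k in prod_{y in N^2} (1 + t^y u)
         = number of sets of exactly k distinct vectors of N^2 (0 allowed)
           summing to x, represented as lex-increasing k-tuples. *)
Definition q (k : nat) (x : nat * nat) : nat :=
  #|[set t : k.-tuple (box x) |
      sorted lexlt (map (@vec_of x) t) && (vsum (map (@vec_of x) t) == x)]|.

(* Main.v *)
Require Import Defs.
From mathcomp Require Import all_boot all_order all_algebra all_fingroup.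
From mathcomp Require Import ring lra zify.
From Stdlib Require Import FunctionalExtensionality.
Set Implicit Arguments. Unset Strict Implicit. Unset Printing Implicit Defensive.
Import Order.TTheory GRing.Theory Num.Theory.

Section Ops.
Variable n : nat.
Local Notation cfg := (n.-tuple (nat * nat)).

Definition upd (s : cfg) (i : 'I_n) (y : nat * nat) : cfg :=
  [tuple if j == i then y else tnth s j | j < n].

Lemma tnth_upd s i y j : tnth (upd s i y) j = if j == i then y else tnth s j.
Proof. by rewrite /upd tnth_mktuple. Qed.

Lemma upd_upd s i y z : upd (upd s i y) i z = upd s i z.
Proof. by apply: eq_from_tnth => j; rewrite !tnth_upd; case: (j == i). Qed.

Lemma upd_id s i : upd s i (tnth s i) = s.
Proof. by apply: eq_from_tnth => j; rewrite !tnth_upd; case: eqP => [->|]. Qed.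

Lemma upd_comm s i j y z : i != j -> upd (upd s i y) j z = upd (upd s j z) i y.
Proof.
move=> ij; apply: eq_from_tnth => k; rewrite !tnth_upd.
by case: (eqVneq k j) => [->|kj] //; rewrite eq_sym (negbTE ij).
Qed.

Definition mom (s : cfg) : nat * nat := ((\sum_(i < n) (tnth s i).1)%N, (\sum_(i < n) (tnth s i).2)%N).

Local Open Scope ring_scope.

Definition eterm (f : cfg -> rat) (s : cfg) (i : 'I_n) : rat :=
  if (0 < (tnth s i).1)%N then ((tnth s i).2.+1)%:R * f (upd s i ((tnth s i).1.-1, (tnth s i).2.+1)) else 0.
Definition fterm (f : cfg -> rat) (s : cfg) (i : 'I_n) : rat :=
  if (0 < (tnth s i).2)%N then ((tnth s i).1.+1)%:R * f (upd s i ((tnth s i).1.+1, (tnth s i).2.-1)) else 0.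
Definition Eop f s := \sum_(i < n) eterm f s i.
Definition Fop f s := \sum_(i < n) fterm f s i.

Definition wt (s : cfg) : rat := (mom s).1%:R - (mom s).2%:R.

Lemma if_sum (b : bool) (c : rat) (X : 'I_n -> rat) :
  (if b then c * \sum_j X j else 0) = \sum_j (if b then c * X j else 0).
Proof. by case: b; rewrite ?big_distrr // big1. Qed.

Lemma commEF f s : Eop (Fop f) s - Fop (Eop f) s = wt s * f s.
Proof.
rewrite /Eop /Fop.
have -> : \sum_(i < n) eterm (fun s0 => \sum_(i0 < n) fterm f s0 i0) s i =
   \sum_(i < n) \sum_(j < n) (if (0 < (tnth s i).1)%N then ((tnth s i).2.+1)%:R *
       fterm f (upd s i ((tnth s i).1.-1, (tnth s i).2.+1)) j else 0).
  by apply: eq_bigr => i _; rewrite /eterm if_sum.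
have -> : \sum_(i < n) fterm (fun s0 => \sum_(i0 < n) eterm f s0 i0) s i =
   \sum_(j < n) \sum_(i < n) (if (0 < (tnth s j).2)%N then ((tnth s j).1.+1)%:R *
       eterm f (upd s j ((tnth s j).1.+1, (tnth s j).2.-1)) i else 0).
  by apply: eq_bigr => i _; rewrite /fterm if_sum.
rewrite [X in _ - X]exchange_big /= -sumrB.
rewrite /wt /mom /= !natr_sum -sumrB mulr_suml.
apply: eq_bigr => i _; rewrite -sumrB (bigD1 i) //= big1 ?addr0.
  rewrite /fterm /eterm !tnth_upd !eqxx /= upd_upd.
  case E: (tnth s i) => [a b] /=.
  rewrite upd_upd.
  case: a E => [|a] E; case: b E => [|b] E /=; rewrite ?(E, upd_id).
  1-4: rewrite -?E ?upd_id.
  1-4: ring.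
move=> j ji; rewrite /fterm /eterm !tnth_upd (negbTE ji) eq_sym (negbTE ji).
case: ifP => _; case: ifP => _; rewrite ?mulr0 ?subrr //.
by rewrite upd_comm 1?eq_sym // mulrCA subrr.
Qed.

Lemma mom_upd1 s i y : ((mom (upd s i y)).1 + (tnth s i).1 = (mom s).1 + y.1)%N.
Proof.
rewrite /mom /= (bigD1 i) //= [\sum_(i0 < n) (tnth s i0).1](bigD1 i) //= tnth_upd eqxx.
have -> : (\sum_(j < n | j != i) (tnth (upd s i y) j).1 = \sum_(j < n | j != i) (tnth s j).1)%N.
  by apply: eq_bigr => j /negbTE ji; rewrite tnth_upd ji.
ring.
Qed.

Lemma mom_upd2 s i y : ((mom (upd s i y)).2 + (tnth s i).2 = (mom s).2 + y.2)%N.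
Proof.
rewrite /mom /= (bigD1 i) //= [\sum_(i0 < n) (tnth s i0).2](bigD1 i) //= tnth_upd eqxx.
have -> : (\sum_(j < n | j != i) (tnth (upd s i y) j).2 = \sum_(j < n | j != i) (tnth s j).2)%N.
  by apply: eq_bigr => j /negbTE ji; rewrite tnth_upd ji.
ring.
Qed.

Definition supp (f : cfg -> rat) X Y := forall s, f s != 0 -> mom s = (X, Y).

Lemma sum_neq0 (F : 'I_n -> rat) : \sum_i F i != 0 -> exists i, F i != 0.
Proof.
move=> h; case: (pickP (fun i => F i != 0)) => [i hi|h2]; first by exists i.
by move: h; rewrite big1 ?eqxx // => i _; apply/eqP/negbFE/h2.
Qed.

Lemma suppE f X Y : supp f X Y.+1 -> supp (Eop f) X.+1 Y.
Proof.
move=> H s /sum_neq0 [i]; rewrite /eterm; case: ifP => [a0|]; last by rewrite eqxx.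
rewrite mulf_eq0 negb_or => /andP [_ /H] hm.
have h1 := mom_upd1 s i ((tnth s i).1.-1, (tnth s i).2.+1).
have h2 := mom_upd2 s i ((tnth s i).1.-1, (tnth s i).2.+1).
move: h1 h2; rewrite hm; case: (mom s) => m1 m2 /= h1 h2; congr pair; lia.
Qed.

Lemma suppE0 f X : supp f X 0 -> forall s, Eop f s = 0.
Proof.
move=> H s; apply: big1 => i _; rewrite /eterm; case: ifP => // a0.
have [->|/H hm] := eqVneq (f (upd s i ((tnth s i).1.-1, (tnth s i).2.+1))) 0; first by rewrite mulr0.
have h2 := mom_upd2 s i ((tnth s i).1.-1, (tnth s i).2.+1).
move: h2; rewrite hm; case: (mom s) => m1 m2 /= h2; lia.
Qed.

Lemma suppF f X Y : supp f X.+1 Y -> supp (Fop f) X Y.+1.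
Proof.
move=> H s /sum_neq0 [i]; rewrite /fterm; case: ifP => [a0|]; last by rewrite eqxx.
rewrite mulf_eq0 negb_or => /andP [_ /H] hm.
have h1 := mom_upd1 s i ((tnth s i).1.+1, (tnth s i).2.-1).
have h2 := mom_upd2 s i ((tnth s i).1.+1, (tnth s i).2.-1).
move: h1 h2; rewrite hm; case: (mom s) => m1 m2 /= h1 h2; congr pair; lia.
Qed.

Definition Ek k f := iter k Eop f.

Lemma suppEk f X Y : supp f X Y -> forall k s, Ek k f s != 0 -> (k <= Y)%N /\ mom s = (X + k, Y - k)%N.
Proof.
move=> hs; elim=> [|k IH] s.
  by rewrite addn0 subn0 => /hs.
case: (ltnP k Y) => hk.
  have hs2 : supp (Ek k f) (X + k) (Y - k).-1.+1.
    by move=> t /IH [_ ->]; rewrite prednK // subn_gt0.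
  move/(suppE hs2) => ->; split => //; congr pair; lia.
have hs2 : supp (Ek k f) (X + k) 0.
  move=> t /IH [hk2 ->]; congr pair; lia.
by rewrite /= (suppE0 hs2) eqxx.
Qed.

Lemma Eop_scale (c : rat) (g : cfg -> rat) s : Eop (fun t => c * g t) s = c * Eop g s.
Proof.
rewrite /Eop mulr_sumr; apply: eq_bigr => i _; rewrite /eterm.
by case: ifP => _; rewrite ?mulr0 // mulrCA.
Qed.

Lemma Eop_zero g s : (forall t, g t = 0) -> Eop g s = 0.
Proof. by move=> h; apply: big1 => i _; rewrite /eterm h mulr0; case: ifP. Qed.

Lemma Fop_zero g s : (forall t, g t = 0) -> Fop g s = 0.
Proof. by move=> h; apply: big1 => i _; rewrite /fterm h mulr0; case: ifP. Qed.

Lemma FEk f X Y : supp f X Y -> (forall s, Fop f s = 0) -> forall k s,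
  Fop (Ek k.+1 f) s = - ((k.+1)%:R * (X%:R - Y%:R + k%:R)) * Ek k f s.
Proof.
move=> hs hF; elim=> [|k IH] s.
  have h := commEF f s; rewrite (Eop_zero _ hF) sub0r in h.
  have hw : wt s * f s = (X%:R - Y%:R) * f s.
    by have [->|/hs hm] := eqVneq (f s) 0; [rewrite !mulr0 | rewrite /wt hm].
  change (Fop (Eop f) s = - (1%:R * (X%:R - Y%:R + 0%:R)) * f s).
  rewrite addr0 mul1r mulNr -hw -h opprK //.
have h := commEF (Ek k.+1 f) s.
have hF1 : Fop (Ek k.+1 f) = fun t => - ((k.+1)%:R * (X%:R - Y%:R + k%:R)) * Ek k f t.
  by apply: functional_extensionality => t; rewrite IH.
rewrite hF1 Eop_scale in h; change (Eop (Ek k f)) with (Ek k.+1 f) in h.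
have hw : wt s * Ek k.+1 f s = (X%:R - Y%:R + 2 * (k.+1)%:R) * Ek k.+1 f s.
  have [->|/(suppEk hs) [hk hm]] := eqVneq (Ek k.+1 f s) 0; first by rewrite !mulr0.
  by rewrite /wt hm /= natrD natrB //; congr (_ * _); ring.
change (Fop (Eop (Ek k.+1 f)) s = - ((k.+2)%:R * (X%:R - Y%:R + (k.+1)%:R)) * Ek k.+1 f s).
have -> : Fop (Eop (Ek k.+1 f)) s = - ((k.+1)%:R * (X%:R - Y%:R + k%:R)) * Ek k.+1 f s - wt s * Ek k.+1 f s.
  by rewrite -h; ring.
rewrite hw; ring.
Qed.

Lemma Finj f X Y : supp f X Y -> (Y < X)%N -> (forall s, Fop f s = 0) -> forall s, f s = 0.
Proof.
move=> hs hXY hF.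
have h0 : forall s, Ek Y.+1 f s = 0.
  by move=> s; apply/eqP; apply/negPn/negP => /(suppEk hs) []; rewrite ltnn.
suff: forall j, (j <= Y.+1)%N -> forall s, Ek (Y.+1 - j) f s = 0.
  by move/(_ Y.+1 (leqnn _)); rewrite subnn.
elim=> [|j IH] hj s; first by rewrite subn0.
have hk : (Y.+1 - j = (Y - j).+1)%N by rewrite subSn // -ltnS.
have := FEk hs hF (Y - j) s.
rewrite -hk (Fop_zero _ (IH (ltnW hj))) subSS => /esym/eqP.
rewrite mulf_eq0 oppr_eq0 mulf_eq0 => /orP [/orP [h|/eqP h]|/eqP //].
  by move: h; rewrite pnatr_eq0 subn_eq0 leqNgt hj.
have : (Y%:R : rat) < X%:R by rewrite ltr_nat.
have : (0 : rat) <= (Y - j)%:R by [].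
lra.
Qed.

Lemma sum_neq0' (I : finType) (F : I -> rat) : \sum_i F i != 0 -> exists i, F i != 0.
Proof.
move=> h; case: (pickP (fun i => F i != 0)) => [i hi|h2]; first by exists i.
by move: h; rewrite big1 ?eqxx // => i _; apply/eqP/negbFE/h2.
Qed.

Definition act (sg : {perm 'I_n}) (s : cfg) : cfg := [tuple tnth s (sg i) | i < n].

Lemma tnth_act sg s i : tnth (act sg s) i = tnth s (sg i).
Proof. by rewrite /act tnth_mktuple. Qed.

Lemma act_mul sg tau s : act tau (act sg s) = act (tau * sg)%g s.
Proof. by apply: eq_from_tnth => i; rewrite !tnth_act permM. Qed.

Lemma act1 s : act 1%g s = s.
Proof. by apply: eq_from_tnth => i; rewrite !tnth_act perm1. Qed.

Lemma act_inj sg : injective (act sg).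
Proof. by move=> s t h; rewrite -(act1 s) -(act1 t) -(mulVg sg) -!act_mul h. Qed.

Lemma act_upd sg s i y : upd (act sg s) i y = act sg (upd s (sg i) y).
Proof. by apply: eq_from_tnth => j; rewrite !(tnth_act, tnth_upd) (inj_eq perm_inj). Qed.

Lemma mom_act sg s : mom (act sg s) = mom s.
Proof.
rewrite /mom; congr pair; rewrite [RHS](reindex_inj (@perm_inj _ sg)) /=;
  by apply: eq_bigr => i _; rewrite tnth_act.
Qed.

Definition equiv (chi : {perm 'I_n} -> rat) (f : cfg -> rat) :=
  forall sg s, f (act sg s) = chi sg * f s.

Lemma Fop_equiv chi f : equiv chi f -> equiv chi (Fop f).
Proof.
move=> h sg s; rewrite /Fop mulr_sumr [RHS](reindex_inj (@perm_inj _ sg)) /=.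
apply: eq_bigr => i _; rewrite /fterm !tnth_act act_upd h.
by case: ifP => _; rewrite ?mulr0 // mulrCA.
Qed.

Lemma Fop_lin (I : finType) (c : I -> rat) (g : I -> cfg -> rat) s :
  Fop (fun t => \sum_i c i * g i t) s = \sum_i c i * Fop (g i) s.
Proof.
rewrite /Fop.
have -> : \sum_(k < n) fterm (fun t => \sum_i c i * g i t) s k =
          \sum_(k < n) \sum_i c i * fterm (g i) s k.
  apply: eq_bigr => k _; rewrite /fterm; case: ifP => _; last by rewrite big1 // => i _; rewrite mulr0.
  by rewrite mulr_sumr; apply: eq_bigr => i _; rewrite mulrCA.
rewrite exchange_big /=; apply: eq_bigr => i _; by rewrite mulr_sumr.
Qed.

Definition vb (chi : {perm 'I_n} -> rat) (c : cfg) (s : cfg) : rat :=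
  \sum_(sg : {perm 'I_n}) (if s == act sg c then chi sg else 0).

Lemma vb_equiv chi c : (forall a b, chi (a * b)%g = chi a * chi b) -> equiv chi (vb chi c).
Proof.
move=> chiM tau s; rewrite /vb mulr_sumr (reindex_inj (mulgI tau)) /=.
apply: eq_bigr => r _; rewrite -act_mul (inj_eq (@act_inj tau)) chiM.
by case: ifP; rewrite ?mulr0.
Qed.

Lemma mom_vsum (c : cfg) : mom c = vsum c.
Proof.
by rewrite /mom /vsum !sumnE !big_map !big_tuple.
Qed.

End Ops.

Lemma lexle_trans : transitive lexle.
Proof. move=> [a b] [c d] [e f]; rewrite /lexle /=; lia. Qed.
Lemma lexle_anti : antisymmetric lexle.
Proof. move=> [a b] [c d]; rewrite /lexle /= => h; apply/eqP; rewrite xpair_eqE; lia. Qed.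
Lemma lexle_total : total lexle.
Proof. move=> [a b] [c d]; rewrite /lexle /=; lia. Qed.
Lemma lexlt_trans : transitive lexlt.
Proof. move=> [a b] [c d] [e f]; rewrite /lexlt /=; lia. Qed.
Lemma lexlt_irr : irreflexive lexlt.
Proof. move=> [a b]; rewrite /lexlt /=; lia. Qed.
Lemma lexlt_le u v : lexlt u v -> lexle u v.
Proof. case: u v => [a b] [c d]; rewrite /lexle /lexlt /=; lia. Qed.
Lemma lexle_lt u v : lexle u v -> u != v -> lexlt u v.
Proof. case: u v => [a b] [c d]; rewrite /lexle /lexlt /= xpair_eqE; lia. Qed.

Lemma sorted_le_lt (l : seq (nat * nat)) : sorted lexle l -> uniq l -> sorted lexlt l.
Proof.
elim: l => // x [|y l] IH //= /andP [hxy hp] /andP [hx hu].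
rewrite (lexle_lt hxy) /=; first exact: (IH hp hu).
by apply: contraNneq hx => ->; rewrite mem_head.
Qed.

Section Count.
Variable n : nat.
Local Notation cfg := (n.-tuple (nat * nat)).
Local Open Scope ring_scope.

Definition Aset (x : nat * nat) (Pr : rel (nat * nat)) :=
  [set t : n.-tuple (box x) | sorted Pr (map (@vec_of x) t) && (vsum (map (@vec_of x) t) == x)].
Definition cf x (t : n.-tuple (box x)) : cfg := map_tuple (@vec_of x) t.

Lemma vec_of_inj x : injective (@vec_of x).
Proof.
move=> [a b] [c d] /= [] /val_inj h1 /val_inj h2; by rewrite h1 h2.
Qed.

Lemma cf_inj x : injective (@cf x).
Proof. by move=> t u /(congr1 val) /= /(inj_map (@vec_of_inj x)) /val_inj. Qed.

Lemma mom_cf x Pr t : t \in Aset x Pr -> mom (cf t) = x.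
Proof. by rewrite inE mom_vsum => /andP [_ /eqP]. Qed.

Lemma sorted_cf x Pr t : t \in Aset x Pr -> sorted Pr (cf t).
Proof. by rewrite inE => /andP []. Qed.

Lemma canon_in x Pr (c : cfg) : sorted Pr c -> mom c = x ->
  exists t, t \in Aset x Pr /\ cf t = c.
Proof.
move=> hs hm.
have hb : forall v, v \in c -> (v.1 < x.1.+1)%N /\ (v.2 < x.2.+1)%N.
  move=> v /tnthP [i ->]; rewrite -hm /mom /= !ltnS.
  by split; rewrite (bigD1 i) //= leq_addr.
pose g (v : nat * nat) : box x := (inord v.1, inord v.2).
have hc : cf (map_tuple g c) = c.
  apply: val_inj => /=; rewrite -map_comp -[RHS]map_id; apply/eq_in_map => v /hb [h1 h2].
  by rewrite /= /vec_of /= !inordK // -surjective_pairing.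
exists (map_tuple g c); split => //.
rewrite inE; have := congr1 val hc => /= ->; rewrite hs -mom_vsum hm eqxx //.
Qed.

Lemma vb_off chi (c c' : cfg) : sorted lexle c -> sorted lexle c' -> c != c' -> vb chi c c' = 0.
Proof.
move=> hc hc' hne; apply: big1 => sg _; case: eqP => // h.
have hp : perm_eq c' c by apply/tuple_permP; exists sg; rewrite h.
have := sorted_eq lexle_trans lexle_anti hc hc'; rewrite perm_sym hp => /(_ isT) /val_inj e.
by move: hne; rewrite e eqxx.
Qed.

Lemma count_gen (chi : {perm 'I_n} -> rat) (Pr : rel (nat * nat)) X Y :
  (Y < X.+1)%N ->
  (forall a b, chi (a * b)%g = chi a * chi b) ->
  (forall u v, Pr u v -> lexle u v) ->
  (forall t, t \in Aset (X.+1, Y) Pr -> vb chi (cf t) (cf t) != 0) ->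
  (forall g : cfg -> rat, equiv chi g -> forall s, g s != 0 -> exists sg, sorted Pr (act sg s)) ->
  (#|Aset (X.+1, Y) Pr| <= #|Aset (X, Y.+1) Pr|)%N.
Proof.
move=> hXY chiM hPr H1 H3.
set As := Aset (X.+1, Y) Pr; set At := Aset (X, Y.+1) Pr.
pose M := \matrix_(i < #|As|, j < #|At|) Fop (vb chi (cf (enum_val i))) (cf (enum_val j)).
have key : forall u : 'rV[rat]_#|As|, u *m M = 0 -> u = 0.
  move=> u hu.
  pose G := fun s => \sum_i u 0 i * vb chi (cf (enum_val i)) s.
  have hGeq : equiv chi G.
    move=> sg s; rewrite /G mulr_sumr; apply: eq_bigr => i _; rewrite vb_equiv //; ring.
  have hGs : supp G X.+1 Y.
    move=> s /sum_neq0' [i]; rewrite mulf_eq0 negb_or => /andP [_ /sum_neq0' [sg]].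
    case: ifP => [/eqP -> _|_]; last by rewrite eqxx.
    by rewrite mom_act (mom_cf (enum_valP i)).
  have hF0 : forall s, Fop G s = 0.
    move=> s; apply/eqP/negPn/negP => hne.
    have [sg hsg] := H3 _ (Fop_equiv hGeq) _ hne.
    have hm : mom (act sg s) = (X, Y.+1) by rewrite mom_act; exact: suppF hGs _ hne.
    have [b [hb hcb]] := canon_in hsg hm.
    have h0 : Fop G (act sg s) = 0.
      rewrite -hcb /G Fop_lin.
      have := congr1 (fun m : 'M[rat]_(1, #|At|) => m 0 (enum_rank_in hb b)) hu; rewrite !mxE => h; rewrite -[X in _ = X]h.
      by apply: eq_bigr => i _; rewrite mxE (enum_rankK_in hb hb).
    have : Fop G s = chi (sg^-1)%g * Fop G (act sg s) by rewrite -(Fop_equiv hGeq) act_mul mulVg act1.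
    by rewrite h0 mulr0 => /eqP; rewrite (negbTE hne).
  have hG0 := Finj hGs hXY hF0.
  apply/rowP => i0; rewrite mxE.
  have := hG0 (cf (enum_val i0)); rewrite /G (bigD1 i0) //= big1 ?addr0.
    by move/eqP; rewrite mulf_eq0 (negbTE (H1 _ (enum_valP i0))) orbF => /eqP.
  move=> i hi; rewrite vb_off ?mulr0 //.
  - apply: (sub_sorted hPr); exact: (sorted_cf (enum_valP i)).
  - apply: (sub_sorted hPr); exact: (sorted_cf (enum_valP i0)).
  - by rewrite (inj_eq (@cf_inj _)) (inj_eq enum_val_inj).
have hfree : row_free M.
  rewrite -kermx_eq0; apply/eqP/row_matrixP => i; rewrite row0; apply: key.
  by rewrite -row_mul mulmx_ker row0.
by apply: leq_trans (rank_leq_col M); rewrite row_leq_rank.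
Qed.

Lemma sort_act (s : cfg) : exists sg, sort lexle s = act sg s :> seq _.
Proof.
have hp : perm_eq (sort lexle s) s by rewrite perm_sort.
by case/tuple_permP: hp => sg e; exists sg.
Qed.

Lemma count_p X Y : (Y < X.+1)%N -> (#|Aset (X.+1, Y) lexle| <= #|Aset (X, Y.+1) lexle|)%N.
Proof.
move=> hXY; apply: (@count_gen (fun _ => 1)) => //.
- move=> t _; rewrite /vb (bigD1 1%g) //= act1 eqxx.
  have h : 0 <= \sum_(sg | sg != 1%g) (if cf t == act sg (cf t) then (1 : rat) else 0).
    by apply: sumr_ge0 => sg _; case: ifP.
  by apply/negP => /eqP; lra.
- move=> g _ s _; have [sg e] := sort_act s; exists sg.
  by rewrite -e; exact: (sort_sorted lexle_total s).
Qed.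

Lemma count_q X Y : (Y < X.+1)%N -> (#|Aset (X.+1, Y) lexlt| <= #|Aset (X, Y.+1) lexlt|)%N.
Proof.
move=> hXY; apply: (@count_gen (fun sg => (-1) ^+ odd_perm sg)) => //.
- by move=> a b; rewrite odd_permM signr_addb.
- exact: lexlt_le.
- move=> t ht; have hu : uniq (cf t) := sorted_uniq lexlt_trans lexlt_irr (sorted_cf ht).
  rewrite /vb (bigD1 1%g) //= act1 eqxx odd_perm1 expr0 big1 ?addr0 ?oner_eq0 //.
  move=> sg hsg; case: ifP => // /eqP e; exfalso; move/eqP: hsg; apply.
  apply/permP => i; rewrite perm1; apply: (tuple_uniqP _ hu).
  by rewrite -tnth_act -e.
- move=> g hg s hs.
  have hu : uniq s.
    apply/tuple_uniqP => i j hij; case: (eqVneq i j) => // ne; exfalso.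
    have ea : act (tperm i j) s = s.
      apply: eq_from_tnth => k; rewrite tnth_act.
      by case: tpermP => [->|->|].
    have := hg (tperm i j) s; rewrite ea odd_tperm ne expr1 => h.
    by move: hs; have -> : g s = 0 by lra.
  have [sg e] := sort_act s; exists sg.
  rewrite -e; apply: sorted_le_lt; first exact: (sort_sorted lexle_total s).
  by rewrite sort_uniq.
Qed.

End Count.

Theorem corollary6 (x1 x2 n : nat) :
  1 <= x2 -> x2 <= x1 ->
  p n (x1.+1, x2.-1) <= p n (x1, x2) /\ q n (x1.+1, x2.-1) <= q n (x1, x2).
Proof.
move=> h1 h2.
have e : x2 = (x2.-1).+1 by rewrite prednK.
have hY : x2.-1 < x1.+1 by lia.
split.
- rewrite [in p n (x1, x2)]e; exact: (count_p n hY).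
- rewrite [in q n (x1, x2)]e; exact: (count_q n hY).
Qed.
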